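(* Let $p$ be a prime, let $\mathcal{F}$ be a fusion system (not necessarily saturated) on a finite $p$-group $S$, and let $\mathcal{H}$ be a collection of subgroups of $S$ which is closed under $\mathcal{F}$-conjugation and under taking subgroups. Let $X_0$ be a virtual $S$-set with rational coefficients such that $|X_0^P|=|X_0^{P'}|$ for all $P,P'\le S$ with $P,P'\notin\mathcal{H}$ that are $\mathcal{F}$-conjugate. Then there exists a virtual $S$-set $X$ with rational coefficients such that: (a) $|X^P|=|X^{P'}|$ for all $\mathcal{F}$-conjugate $P,P'\le S$; (b) $|X^P|=|X_0^P|$ for all $P\le S$ with $P\notin\mathcal{H}$; and (c) $X-X_0$ is a virtual $S$-set with nonnegative rational coefficients.
   Context: A fusion system $\mathcal{F}$ on a finite $p$-group $S$ is a category whose objects are the subgroups of $S$, whose morphism sets $\mathrm{Hom}_{\mathcal{F}}(P,Q)$ are sets of injective group homomorphisms $P\to Q$, such that every map $u\mapsto sus^{-1}$ ($s\in S$, $sPs^{-1}\le Q$) lies in $\mathrm{Hom}_{\mathcal{F}}(P,Q)$, and every $\varphi\in\mathrm{Hom}_{\mathcal{F}}(P,Q)$ induces an isomorphism $P\to\varphi(P)$ in $\mathcal{F}$ whose inverse is also in $\mathcal{F}$; no saturation is assumed. Subgroups $P,P'\le S$ are $\mathcal{F}$-conjugate if there is an isomorphism $P\to P'$ in $\mathcal{F}$. A virtual $S$-set with rational coefficients is an element $\sum_H c_H\, S/H$ of $\mathbb{Q}\otimes_{\mathbb{Z}}B(S)$, where $H$ runs over representatives of $S$-conjugacy classes of subgroups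 of $S$ and $c_H\in\mathbb{Q}$; it has nonnegative rational coefficients if all $c_H\ge 0$. For such $X=\sum_H c_H\,S/H$ and $P\le S$, $|X^P|$ denotes $\sum_H c_H\,|(S/H)^P|$, where $(S/H)^P$ is the set of $P$-fixed points of the $S$-set $S/H$. *)

(* Defs.v *)
From HB Require Import structures.
From mathcomp Require Import all_boot all_order all_algebra all_fingroup all_solvable.
Set Implicit Arguments. Unset Strict Implicit. Unset Printing Implicit Defensive.
Import GRing.Theory Num.Theory.

Local Open Scope group_scope.

Section FusionDefs.
Variable gT : finGroupType.

Definition is_inj_hom (P Q : {set gT}) (f : gT -> gT) : Prop :=
  {in P &, {morph f : x y / x * y}} /\ {in P &, injective f} /\ f @: P \subset Q.

(* A (not necessarily saturated) fusion system on S.  A morphism P -> Q is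
   represented by a function gT -> gT; only its values on P matter.
   F P Q f means "(f restricted to P) lies in Hom_F(P,Q)". *)
Definition fusion_system (S : {group gT})
    (F : {group gT} -> {group gT} -> (gT -> gT) -> Prop) : Prop :=
  [/\ (forall (P Q : {group gT}) f, F P Q f ->
         [/\ P \subset S, Q \subset S & is_inj_hom P Q f]),
      (* conjugation maps u |-> s u s^-1 = u ^ s^-1 *)
      (forall (P Q : {group gT}) s, P \subset S -> Q \subset S -> s \in S ->
         P :^ s^-1 \subset Q ->
         exists2 f, F P Q f & {in P, forall u, f u = u ^ s^-1}) &
      (forall (P Q : {group gT}) f, F P Q f ->
         exists R : {group gT}, [/\ (R : {set gT}) = f @: P,
           (exists2 g, F P R g & {in P, forall u, g u = f u}) &
           (exists2 h, F R P h & {in P, forall u, h (f u) = u})])].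

Definition fconj (F : {group gT} -> {group gT} -> (gT -> gT) -> Prop)
    (P P' : {group gT}) : Prop :=
  exists2 f, F P P' f & f @: P = P'.

Definition subgrp_sets (S : {group gT}) : {set {set gT}} :=
  [set H : {set gT} | (H \subset S) && group_set H].

Definition subgroup_classes (S : {group gT}) : {set {set {set gT}}} :=
  [set H :^: S | H in subgrp_sets S].

Definition class_rep (C : {set {set gT}}) : {set gT} := odflt set0 [pick H in C].

(* |(S/H)^P| : number of left cosets xH (x in S) fixed by all u in P *)
Definition fix_card (S : {group gT}) (P H : {set gT}) : nat :=
  #|[set A in lcosets H S | [forall u in P, u *: A == A]]|.

(* A virtual S-set with rational coefficients is a function
   c : (classes of subgroups) -> rat, X = sum_C c C * S/(class_rep C).
   Its number of P-fixed points: *)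
Definition vfix (S : {group gT}) (X : {set {set gT}} -> rat) (P : {set gT}) : rat :=
  (\sum_(C in subgroup_classes S) X C * (fix_card S P (class_rep C))%:R)%R.

End FusionDefs.

(* Main.v *)
Require Import Defs.
From HB Require Import structures.
From mathcomp Require Import all_boot all_order all_algebra all_fingroup all_solvable.
Import Order.TTheory GRing.Theory Num.Theory.
Set Implicit Arguments. Unset Strict Implicit.

Section G.
Variable gT : finGroupType.
Implicit Types (S H K : {group gT}) (R : {set gT}).
Local Open Scope group_scope.

Lemma fix_card_sub S H R : fix_card S R H != 0%N ->
  exists2 x, x \in S & R \subset H :^ x.
Proof.
rewrite /fix_card -lt0n card_gt0 => /set0Pn [A].
rewrite inE => /andP [/imsetP [x xS ->] /forall_inP fixA].
exists x^-1; first by rewrite groupV.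
apply/subsetP => u uR; rewrite mem_conjg invgK conjgE.
have := fixA u uR => /eqP eq1.
have := lcoset_refl H (u * x).
rewrite lcosetE in eq1; by rewrite lcosetM eq1 mem_lcoset mulgA.
Qed.

Lemma fix_card_self S H : H \subset S -> (0 < fix_card S H H)%N.
Proof.
move=> sHS; rewrite /fix_card card_gt0; apply/set0Pn; exists (1 *: (H : {set gT})).
rewrite inE; apply/andP; split; first by apply/imsetP; exists 1 => //; rewrite lcosetE.
by apply/forall_inP => u uH; rewrite lcoset1 lcoset_id.
Qed.

Lemma fix_card_conj_le S (H : {set gT}) R y : y \in S ->
  (fix_card S R H <= fix_card S (R :^ y) H)%N.
Proof.
move=> yS; rewrite /fix_card.
rewrite -(card_imset _ (@lcoset_inj _ y^-1)).
apply: subset_leq_card; apply/subsetP => B /imsetP [A].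
rewrite inE => /andP [/imsetP [x xS ->] /forall_inP fixA] ->.
rewrite inE; apply/andP; split.
  by apply/imsetP; exists (y^-1 * x); rewrite ?groupM ?groupV // !lcosetE lcosetM.
apply/forall_inP => v; rewrite mem_conjg => /fixA /eqP eq1.
apply/eqP; rewrite -{2}eq1 -!lcosetM.
by congr (_ *: _); rewrite conjgE invgK !mulgA mulVg mul1g.
Qed.

Lemma fix_card_conj S (H : {set gT}) R y : y \in S ->
  fix_card S (R :^ y) H = fix_card S R H.
Proof.
move=> yS; apply/eqP; rewrite eqn_leq (fix_card_conj_le _ _ yS) andbT.
have := @fix_card_conj_le S H (R :^ y) y^-1. rewrite groupV conjsgK. by apply.
Qed.


Lemma class_conj S (A : {set gT}) x : x \in S -> (A :^ x) :^: S = A :^: S.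
Proof. by move=> xS; rewrite conjugates_conj lcoset_id. Qed.

Lemma classes_rep S C : C \in subgroup_classes S ->
  exists K : {group gT}, [/\ K \subset S, class_rep C = K & C = K :^: S].
Proof.
case/imsetP => A; rewrite inE => /andP [sAS gA] ->.
pose H := Group gA.
rewrite /class_rep; case: pickP => [B BC | /(_ A)]; last first.
  by rewrite (_ : A \in A :^: S) //; apply/imsetP; exists 1; rewrite ?conjsg1.
case/imsetP: BC => z zS ->.
exists (H :^ z)%G; split => //=.
  by rewrite -(conjGid zS) conjSg.
by rewrite class_conj.
Qed.


Lemma vfix_conj S (X : {set {set gT}} -> rat) R y : y \in S ->
  vfix S X (R :^ y) = vfix S X R.
Proof.
by move=> yS; rewrite /vfix; apply: eq_bigr => C _; rewrite fix_card_conj.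
Qed.

End G.

Section Main.
Variable gT : finGroupType.
Variables (S : {group gT}) (F : {group gT} -> {group gT} -> (gT -> gT) -> Prop)
  (Hc : {set {set gT}}) (X0 : {set {set gT}} -> rat).
Hypothesis hF : fusion_system S F.
Hypothesis hHS : Hc \subset subgrp_sets S.
Hypothesis hconj : forall P P' : {group gT}, (P : {set gT}) \in Hc -> fconj F P P' ->
     (P' : {set gT}) \in Hc.
Hypothesis hsub : forall P Q : {group gT}, (P : {set gT}) \in Hc -> Q \subset P ->
     (Q : {set gT}) \in Hc.
Local Open Scope group_scope.

Lemma Hc_sub (P : {set gT}) : P \in Hc -> P \subset S.
Proof. by move=> /(subsetP hHS); rewrite inE => /andP []. Qed.

Lemma Hc_conj (P : {group gT}) y : (P : {set gT}) \in Hc -> y \in S ->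
  P :^ y \in Hc.
Proof.
move=> PH yS; case: hF => _ h2 _.
have sPS := Hc_sub PH.
have sPyS : (P :^ y)%G \subset S by rewrite /= -(conjGid yS) conjSg.
have := h2 P (P :^ y)%G y^-1 sPS sPyS (groupVr yS); rewrite invgK => /(_ (subxx _)) [f Ff eqf].
apply: (hconj PH); exists f => //=.
by apply: eq_in_imset => u uP; rewrite eqf // invgK.
Qed.

Lemma fconj_sym (P P' : {group gT}) : fconj F P P' -> fconj F P' P.
Proof.
case: hF => h1 _ h3; case=> f Ff fP.
case: (h3 _ _ _ Ff) => R [Rdef _ [h Fh hK]].
have RP' : R = P' by apply: group_inj; rewrite Rdef fP.
subst R; exists h => //.
rewrite -fP -imset_comp -[RHS]imset_id; apply: eq_in_imset => u uP /=; exact: hK.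
Qed.

Lemma fconj_card (P P' : {group gT}) : fconj F P P' -> #|P'| = #|P|.
Proof.
case: hF => h1 _ _; case=> f Ff fP.
have [_ _ [_ [injf _]]] := h1 _ _ _ Ff.
by rewrite -fP card_in_imset.
Qed.

Lemma term0 n (R : {group gT}) C : R \subset S -> C \in subgroup_classes S ->
  class_rep C \in Hc -> #|class_rep C| = n ->
  fix_card S R (class_rep C) != 0%N ->
  [/\ (R : {set gT}) \in Hc, (#|R| <= n)%N & (#|R| = n -> C = R :^: S)].
Proof.
move=> sRS CC; have [K [sKS -> Cdef]] := classes_rep CC.
move=> KH Kn /fix_card_sub [x xS sRKx].
have KxH := Hc_conj KH xS.
have RH : (R : {set gT}) \in Hc by apply: (hsub (P := (K :^ x)%G)).
have le : (#|R| <= n)%N by rewrite -Kn -(cardJg K x) subset_leq_card.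
split => // eqn.
have RKx : (R : {set gT}) = K :^ x.
  by apply/eqP; rewrite eqEcard sRKx cardJg Kn eqn leqnn.
by rewrite RKx class_conj.
Qed.


Local Open Scope ring_scope.

Definition inv (X : {set {set gT}} -> rat) n :=
  [/\ forall C, C \in subgroup_classes S -> 0 <= X C - X0 C,
      forall R : {group gT}, R \subset S -> (R : {set gT}) \notin Hc ->
        vfix S X R = vfix S X0 R &
      forall P P' : {group gT}, (P : {set gT}) \in Hc -> (P' : {set gT}) \in Hc ->
        (n <= #|P|)%N -> #|P| = #|P'| -> vfix S X P = vfix S X P'].

Section Step.
Variables (X : {set {set gT}} -> rat) (n : nat).
Hypothesis hinv : inv X n.+1.

Let M := \sum_(K in subgrp_sets S) `|vfix S X K|.
Let d C := if (class_rep C \in Hc) && (#|class_rep C| == n)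
  then (M - vfix S X (class_rep C)) / (fix_card S (class_rep C) (class_rep C))%:R
  else 0.
Let X' C := X C + d C.

Lemma M_ge (K : {set gT}) : K \in Hc -> vfix S X K <= M.
Proof.
move=> KH; have KS : K \in subgrp_sets S by apply: (subsetP hHS).
rewrite /M (bigD1 K) //=; apply: le_trans (ler_norm _) _.
by rewrite lerDl sumr_ge0.
Qed.

Lemma d_ge C : 0 <= d C.
Proof.
rewrite /d; case: ifP => // /andP [KH _].
by rewrite divr_ge0 ?ler0n // subr_ge0 M_ge.
Qed.

Lemma vfix_add (R : {set gT}) : vfix S X' R =
  vfix S X R + \sum_(C in subgroup_classes S) d C * (fix_card S R (class_rep C))%:R.
Proof. by rewrite /vfix -big_split; apply: eq_bigr => C _; rewrite /X' mulrDl. Qed.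

Lemma sum0 (R : {group gT}) : R \subset S -> ((R : {set gT}) \in Hc -> (n < #|R|)%N) ->
  vfix S X' R = vfix S X R.
Proof.
move=> sRS hR; rewrite vfix_add big1 ?addr0 // => C CC.
rewrite /d; case: ifP => [/andP [KH /eqP Kn]|]; last by rewrite mul0r.
case: (fix_card S R (class_rep C) =P 0%N) => [-> | /eqP nz]; first by rewrite mulr0.
have [RH le _] := term0 sRS CC KH Kn nz.
by have := hR RH; rewrite ltnNge le.
Qed.

Lemma sumM (R : {group gT}) : (R : {set gT}) \in Hc -> #|R| = n -> vfix S X' R = M.
Proof.
move=> RH Rn; have sRS := Hc_sub RH.
have CR : R :^: S \in subgroup_classes S.
  by apply/imsetP; exists (R : {set gT}) => //; rewrite inE sRS groupP.
rewrite vfix_add (bigD1 (R :^: S)) //= big1 ?addr0; last first.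
  move=> C /andP [CC neC].
  rewrite /d; case: ifP => [/andP [KH /eqP Kn]|]; last by rewrite mul0r.
  case: (fix_card S R (class_rep C) =P 0%N) => [-> | /eqP nz]; first by rewrite mulr0.
  have [_ _ /(_ Rn) eqC] := term0 sRS CC KH Kn nz.
  by rewrite eqC eqxx in neC.
have [K [sKS Kdef Cdef]] := classes_rep CR.
have : (K : {set gT}) \in R :^: S.
  by rewrite Cdef; apply/imsetP; exists 1%g; rewrite ?conjsg1 ?group1.
case/imsetP => z zS Kz.
have KH : class_rep (R :^: S) \in Hc by rewrite Kdef Kz Hc_conj.
have Kn : #|class_rep (R :^: S)| = n by rewrite Kdef Kz cardJg.
rewrite /d KH Kn eqxx /= Kdef Kz fix_card_conj // vfix_conj //.
have nz : (fix_card S R (R :^ z))%:R != 0 :> rat.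
  by rewrite pnatr_eq0 -lt0n -{1}(conjsgK z R) fix_card_conj ?groupV // fix_card_self // -(conjGid zS) conjSg.
by rewrite mulfVK // addrC subrK.
Qed.

Lemma step : exists X'', inv X'' n.
Proof.
case: hinv => h1 h2 h3.
exists X'; split.
- by move=> C CC; rewrite /X' addrAC addr_ge0 ?h1 ?d_ge.
- move=> R sRS RH; rewrite sum0 ?h2 // => RH'; by rewrite RH' in RH.
- move=> P P' PH P'H le eqc.
  case: (ltngtP n #|P|) le => // [lt _ | eqn _].
    rewrite !sum0 ?Hc_sub // => [|_]; last by rewrite -eqc.
    by apply: h3.
  by rewrite !sumM // -eqc.
Qed.

End Step.

Lemma all_k k : exists X, inv X (#|S|.+1 - k).
Proof.
elim: k => [|k [X hX]].
  exists X0; split => //.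
  - by move=> C _; rewrite subrr.
  - move=> P P' PH _; rewrite subn0 ltnNge => /negP []; exact: subset_leq_card (Hc_sub PH).
case E: (#|S|.+1 - k)%N hX => [|m] hX.
  by exists X; rewrite subnS E.
by have [X'' h] := step hX; exists X''; rewrite subnS E.
Qed.

End Main.

Unset Implicit Arguments.
Theorem lemma3 (gT : finGroupType) (p : nat) (S : {group gT})
  (F : {group gT} -> {group gT} -> (gT -> gT) -> Prop)
  (Hc : {set {set gT}}) (X0 : {set {set gT}} -> rat) :
  prime p -> (p.-group S)%g -> fusion_system S F ->
  Hc \subset subgrp_sets S ->
  (forall P P' : {group gT}, (P : {set gT}) \in Hc -> fconj F P P' ->
     (P' : {set gT}) \in Hc) ->
  (forall P Q : {group gT}, (P : {set gT}) \in Hc -> Q \subset P ->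
     (Q : {set gT}) \in Hc) ->
  (forall P P' : {group gT}, P \subset S -> P' \subset S ->
     (P : {set gT}) \notin Hc -> (P' : {set gT}) \notin Hc -> fconj F P P' ->
     vfix S X0 P = vfix S X0 P') ->
  exists X : {set {set gT}} -> rat,
    [/\ (forall P P' : {group gT}, P \subset S -> P' \subset S -> fconj F P P' ->
           vfix S X P = vfix S X P'),
        (forall P : {group gT}, P \subset S -> (P : {set gT}) \notin Hc ->
           vfix S X P = vfix S X0 P) &
        (forall C, C \in subgroup_classes S -> (0 <= X C - X0 C)%R)].
Proof.
move=> _ _ hF hHS hconj hsub hX0.
have [X [h1 h2 h3]] := @all_k gT S F Hc X0 hF hHS hconj hsub #|S|.+1.
rewrite subnn in h3.
exists X; split => //.
move=> P P' sPS sP'S fc.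
have cP := fconj_card hF fc.
case PH: ((P : {set gT}) \in Hc).
  by apply: h3; rewrite ?cP //; exact: hconj _ _ PH fc.
have P'H : (P' : {set gT}) \notin Hc.
  apply/negP => P'H; move: PH; rewrite (hconj _ _ P'H (fconj_sym hF fc)) //.
rewrite h2 ?PH // h2 //; apply: hX0 => //; by rewrite PH.
Qed.
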